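(* Let $G$ be a finite loopless graph (parallel edges allowed). The set $\mathrm{Short}(\mathcal{C}(G))$ consists of precisely the orientation covectors for $\mathcal{C}(G)$.
   Context: Fix a reference orientation $\mathcal{O}_0$ of $G=(V,E)$; $C_1(G;\mathbb{Z})$ is the free abelian group on $E$ (edges directed by $\mathcal{O}_0$), $E$ orthonormal; $\partial e=v-w$ for $e$ from $w$ to $v$, $\partial^*$ its adjoint; the cut lattice is $\mathcal{C}(G)=\mathrm{im}(\partial^* )\cap C_1(G;\mathbb{Z})$ (over $\mathbb{Q}$). For an orientation $\mathcal{O}$ of $G$, $\chi_{\mathcal{O}}\in C_1(G;\mathbb{Z})$ has $\langle\chi_{\mathcal{O}},e\rangle=1$ if $e$ has the same direction in $\mathcal{O}_0$ and $\mathcal{O}$, and $-1$ otherwise; its restriction to $\mathcal{C}(G)$, an element of $\mathcal{C}(G)^*$, is called an orientation covector. For an integral positive definite lattice $\Lambda$, $\Lambda^*=\{x\in\Lambda\otimes\mathbb{Q}:\langle x,y\rangle\in\mathbb{Z}\ \forall y\}$, $\mathrm{Char}(\Lambda)=\{\chi\in\Lambda^*:\langle\chi,y\rangle\equiv\langle y,y\rangle\pmod2\ \forall y\in\Lambda\}$, and $\mathrm{Short}(\Lambda)$ is the set of $\chi\in\mathrm{Char}(\Lambda)$ of minimal norm in $\chi+2\Lambda$. *)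

(* Defs.v *)
From HB Require Import structures.
From mathcomp Require Import all_boot all_order all_algebra.
Set Implicit Arguments. Unset Strict Implicit. Unset Printing Implicit Defensive.
Import Order.TTheory GRing.Theory Num.Theory.
Local Open Scope ring_scope.

(* A finite loopless multigraph with a reference orientation O_0:
   vertex type V, edge type E (both finite), each edge e is directed by O_0
   from [src e] to [tgt e]; loopless means src e != tgt e.
   Chains C_1(G;Q) are functions E -> rat, with E orthonormal. *)

Section CutLattice.
Variables (V E : finType) (src tgt : E -> V).

Definition dot (x y : E -> rat) : rat := \sum_(e : E) x e * y e.

Definition integral_chain (x : E -> rat) : Prop := forall e, x e \is a Num.int.

(* adjoint d^* of the boundary map (d e = tgt e - src e): d^* f (e) = f(tgt e) - f(src e) *)
Definition cobdry (f : V -> rat) : E -> rat := fun e => f (tgt e) - f (src e).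

Definition cut_lattice (x : E -> rat) : Prop :=
  integral_chain x /\ exists f : V -> rat, forall e, x e = cobdry f e.

End CutLattice.

Section Lattices.
Variable E : finType.
Implicit Types (L : (E -> rat) -> Prop) (x y : E -> rat).

(* L (x) Q, realised as the Q-span of L inside Q^E *)
Definition latQ L x : Prop :=
  exists (n : nat) (c : 'I_n -> rat) (y : 'I_n -> E -> rat),
    (forall i, L (y i)) /\ forall e, x e = \sum_(i < n) c i * y i e.

Definition lat_dual L x : Prop :=
  latQ L x /\ forall y, L y -> dot x y \is a Num.int.

Definition Char L x : Prop :=
  lat_dual L x /\
  forall y, L y -> exists k : int, dot x y - dot y y = 2 * k%:~R.

Definition Short L x : Prop :=
  Char L x /\
  forall y, L y -> dot x x <= dot (fun e => x e + 2 * y e) (fun e => x e + 2 * y e).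

(* an orientation O is encoded by o : E -> bool, o e = true iff e has the
   same direction in O and in O_0; chi_O is the associated +-1 chain *)
Definition chiO (o : E -> bool) : E -> rat := fun e => if o e then 1 else -1.

End Lattices.

(* Main.v *)
Require Import Defs.
From HB Require Import structures.
From mathcomp Require Import all_boot all_order all_algebra.
From mathcomp Require Import ring lra zify.
Import Order.TTheory GRing.Theory Num.Theory.
Local Open Scope ring_scope.
Set Implicit Arguments. Unset Strict Implicit.

Section Aux.
Variables (V E : finType) (src tgt : E -> V).

Definition inc (e : E) (v : V) : rat := (tgt e == v)%:R - (src e == v)%:R.
Definition divF (F : {set E}) (c : E -> rat) (v : V) : rat :=
  \sum_(e in F) inc e v * c e.
Definition cr (S : {set V}) (e : E) : nat := (tgt e \in S) != (src e \in S).
Definition cutF (F : {set E}) (S : {set V}) : rat := \sum_(e in F) (cr S e)%:R.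
Definition gF (F : {set E}) (d : V -> rat) (S : {set V}) : rat := \sum_(v in S) d v + cutF F S.
Definition chib (b : bool) : rat := if b then 1 else -1.

Lemma sum_eqv (S : {set V}) (w : V) :
  \sum_(v in S) ((w == v)%:R : rat) = (w \in S)%:R.
Proof.
case: (boolP (w \in S)) => wS.
  rewrite (bigD1 w) //= eqxx big1 ?addr0 // => v /andP[_ /negbTE].
  by rewrite eq_sym => ->.
rewrite big1 // => v vS.
have -> : (w == v) = false by apply/eqP => wv; rewrite wv vS in wS.
by [].
Qed.

Lemma sum_eqvT (w : V) : \sum_v ((w == v)%:R : rat) = 1.
Proof.
rewrite (bigD1 w) //= eqxx big1 ?addr0 // => v /negbTE.
by rewrite eq_sym => ->.
Qed.

Lemma sum_inc (S : {set V}) e :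
  \sum_(v in S) inc e v = (tgt e \in S)%:R - (src e \in S)%:R.
Proof. by rewrite /inc sumrB !sum_eqv. Qed.

Lemma sum_inc_all e : \sum_v inc e v = 0.
Proof. by rewrite /inc sumrB !sum_eqvT subrr. Qed.

Lemma divF_D1 (F : {set E}) c e v : e \in F ->
  divF F c v = inc e v * c e + divF (F :\ e) c v.
Proof.
move=> eF; rewrite /divF (bigD1 e) //=; congr (_ + _).
by apply: eq_bigl => f; rewrite in_setD1 andbC.
Qed.

Lemma cutF_D1 (F : {set E}) (S : {set V}) e : e \in F ->
  cutF F S = (cr S e)%:R + cutF (F :\ e) S.
Proof.
move=> eF; rewrite /cutF (bigD1 e) //=; congr (_ + _).
by apply: eq_bigl => f; rewrite in_setD1 andbC.
Qed.

Lemma gF_shift (F : {set E}) d e b (S : {set V}) : e \in F ->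
  gF (F :\ e) (fun v => d v - inc e v * chib b) S =
  gF F d S - (((tgt e \in S)%:R - (src e \in S)%:R) * chib b + (cr S e)%:R).
Proof.
move=> eF; rewrite /gF (cutF_D1 S eF) sumrB -mulr_suml sum_inc; ring.
Qed.

Lemma evenh (S : {set V}) e b : exists j : int,
  ((tgt e \in S)%:R - (src e \in S)%:R) * chib b + (cr S e)%:R = 2 * j%:~R.
Proof.
rewrite /cr /chib; case: (tgt e \in S); case: (src e \in S); case: b => /=;
  first [by exists 0; ring | by exists 1; ring].
Qed.

Lemma sum_in (S : {set V}) (d : V -> rat) :
  \sum_(v in S) d v = \sum_v (v \in S)%:R * d v.
Proof.
rewrite big_mkcond; apply: eq_bigr => v _.
by case: (v \in S); rewrite ?mul1r ?mul0r.
Qed.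

Lemma submod (F : {set E}) d e (A B : {set V}) : e \in F -> tgt e \in A -> src e \notin A ->
  src e \in B -> tgt e \notin B ->
  gF F d (A :&: B) + gF F d (A :|: B) + 2 <= gF F d A + gF F d B.
Proof.
move=> eF tA sA sB tB.
have Hd : \sum_(v in A :&: B) d v + \sum_(v in A :|: B) d v
        = \sum_(v in A) d v + \sum_(v in B) d v.
  rewrite !sum_in -!big_split /=; apply: eq_bigr => v _.
  rewrite in_setI in_setU; case: (v \in A); case: (v \in B) => /=; ring.
have c1 : cr (A :&: B) e = 0%N by rewrite /cr !in_setI tA (negbTE sA) (negbTE tB).
have c2 : cr (A :|: B) e = 0%N by rewrite /cr !in_setU tA sB orbT.
have c3 : cr A e = 1%N by rewrite /cr tA (negbTE sA).
have c4 : cr B e = 1%N by rewrite /cr sB (negbTE tB).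
have Hc : cutF F (A :&: B) + cutF F (A :|: B) + 2 <= cutF F A + cutF F B.
  rewrite /cutF (bigD1 e eF) (bigD1 e eF) (bigD1 e eF) (bigD1 e eF) /= c1 c2 c3 c4.
  have : \sum_(i in F | i != e) (cr (A :&: B) i)%:R
       + \sum_(i in F | i != e) (cr (A :|: B) i)%:R
       <= \sum_(i in F | i != e) (cr A i)%:R
       + \sum_(i in F | i != e) ((cr B i)%:R : rat).
    rewrite -!big_split /=; apply: ler_sum => f _.
    rewrite -!natrD ler_nat /cr !in_setI !in_setU.
    by case: (tgt f \in A); case: (tgt f \in B); case: (src f \in A);
      case: (src f \in B).
  lra.
rewrite /gF; lra.
Qed.

Lemma par_le k : (2 * k%:~R : rat) < 2 -> 2 * k%:~R <= 0 :> rat.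
Proof.
move=> h. have : (k%:~R : rat) < 1 by lra.
rewrite ltrz1 => h1. have : k <= 0 by lia. rewrite -(lerz0 rat). lra.
Qed.

Lemma hakimi n : forall (F : {set E}), (#|F| < n)%N -> forall d : V -> rat,
  (forall S, 0 <= gF F d S) ->
  (forall S, exists k : int, gF F d S = 2 * k%:~R) ->
  \sum_v d v = 0 ->
  exists o : E -> bool, forall v, d v = divF F (chiO o) v.
Proof.
elim: n => // n IH F Fn d Ha Hc Hb.
case: (set_0Vmem F) => [F0 | [e eF]].
  exists (fun _ => true) => v; rewrite /divF F0 big_set0.
  have dge : forall u, 0 <= d u.
    move=> u; have := Ha [set u].
    by rewrite /gF big_set1 /cutF F0 big_set0 addr0.
  exact: (psumr_eq0P (fun u _ => dge u) Hb).
set F' := F :\ e.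
have F'n : (#|F'| < n)%N by move: Fn; rewrite (cardsD1 e F) eF.
pose db b := fun v => d v - inc e v * chib b.
have Hcb : forall b S, exists k : int, gF F' (db b) S = 2 * k%:~R.
  move=> b S; rewrite /db gF_shift //.
  have [k ->] := Hc S; have [j ->] := evenh S e b.
  by exists (k - j); rewrite intrB; ring.
have Hbb : forall b, \sum_v db b v = 0.
  by move=> b; rewrite /db sumrB Hb -mulr_suml sum_inc_all mul0r subr0.
suff [b Hab] : exists b, forall S, 0 <= gF F' (db b) S.
  have [o' Ho'] := IH F' F'n (db b) Hab (Hcb b) (Hbb b).
  exists (fun f => if f == e then b else o' f) => v.
  rewrite (divF_D1 _ v eF) /chiO eqxx.
  have -> : divF F' (fun f => if (if f == e then b else o' f) then 1 else -1) v
          = divF F' (chiO o') v.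
    apply: eq_bigr => f; rewrite in_setD1 => /andP[/negbTE -> _] //.
  rewrite -Ho' /db /chib; ring.
have [H1|H1] := boolP [forall S : {set V}, 0 <= gF F' (db true) S].
  by exists true => S; move/forallP: H1.
have [H2|H2] := boolP [forall S : {set V}, 0 <= gF F' (db false) S].
  by exists false => S; move/forallP: H2.
exfalso.
move/forallPn: H1 => [S1]; rewrite -ltNge /db gF_shift // => H1.
move/forallPn: H2 => [S2]; rewrite -ltNge /db gF_shift // => H2.
have par : forall S, gF F d S < 2 -> gF F d S <= 0.
  by move=> S; have [k ->] := Hc S; apply: par_le.
have [tS1 sS1 g1] : [/\ tgt e \in S1, src e \notin S1 & gF F d S1 <= 0].
  move: H1 (Ha S1) (par S1); rewrite /cr /chib.
  case: (tgt e \in S1); case: (src e \in S1) => /= H1 H0 P; try lra.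
  by split => //; apply: P; lra.
have [sS2 tS2 g2] : [/\ src e \in S2, tgt e \notin S2 & gF F d S2 <= 0].
  move: H2 (Ha S2) (par S2); rewrite /cr /chib.
  case: (tgt e \in S2); case: (src e \in S2) => /= H2 H0 P; try lra.
  by split => //; apply: P; lra.
have := submod d eF tS1 sS1 sS2 tS2.
have := Ha (S1 :&: S2); have := Ha (S1 :|: S2); lra.
Qed.

End Aux.

Section Main.
Variables (V E : finType) (src tgt : E -> V).

Lemma sum_f_eq (f : V -> rat) (w : V) : \sum_v f v * (w == v)%:R = f w.
Proof.
rewrite (bigD1 w) //= eqxx mulr1 big1 ?addr0 // => v /negbTE.
by rewrite eq_sym => ->; rewrite mulr0.
Qed.

Lemma sumT (F : E -> rat) : \sum_(e in [set: E]) F e = \sum_e F e.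
Proof. by apply: eq_bigl => e; rewrite in_setT. Qed.

Lemma dot_cobdry (x : E -> rat) (f : V -> rat) :
  dot x (cobdry src tgt f) = \sum_v f v * divF src tgt [set: E] x v.
Proof.
rewrite /dot /divF.
under [RHS]eq_bigr do rewrite mulr_sumr.
rewrite [RHS]exchange_big /= sumT; apply: eq_bigr => e _.
transitivity ((\sum_v f v * inc src tgt e v) * x e); last first.
  by rewrite mulr_suml; apply: eq_bigr => v _; ring.
rewrite /inc; under eq_bigr do rewrite mulrBr.
rewrite sumrB !sum_f_eq /cobdry; ring.
Qed.

Definition yS (S : {set V}) := cobdry src tgt (fun v => ((v \in S)%:R : rat)).

Lemma cut_yS S : cut_lattice src tgt (yS S).
Proof.
split; last by exists (fun v => ((v \in S)%:R : rat)).
by move=> e; rewrite /yS /cobdry rpredB // natr_int.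
Qed.

Lemma dot_yS x S : dot x (yS S) = \sum_(v in S) divF src tgt [set: E] x v.
Proof. by rewrite /yS dot_cobdry sum_in. Qed.

Lemma dot_ySS S : dot (yS S) (yS S) = cutF src tgt [set: E] S.
Proof.
rewrite /cutF sumT; apply: eq_bigr => e _.
rewrite /yS /cobdry /cr.
by case: (tgt e \in S); case: (src e \in S) => /=; ring.
Qed.

Lemma dot_expand (x y : E -> rat) :
  dot (fun e => x e + 2 * y e) (fun e => x e + 2 * y e) =
  dot x x + 4 * (dot x y + dot y y).
Proof.
rewrite /dot -big_split /= mulr_sumr -big_split /=; apply: eq_bigr => e _; ring.
Qed.

Lemma par_edge (c y : rat) : (c = 1 \/ c = -1) -> y \is a Num.int ->
  exists k : int, c * y - y * y = 2 * k%:~R.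
Proof.
move=> hc /intrP [n ->].
have [m [-> | ->]] : exists m, n = 2 * m \/ n = 2 * m + 1.
  by exists (n %/ 2)%Z; lia.
- case: hc => ->.
  + by exists (m - 2 * m * m); rewrite !(intrD, intrM, intrB); ring.
  + by exists (- m - 2 * m * m); rewrite !(intrD, intrM, intrB, intrN); ring.
- case: hc => ->.
  + by exists (- (2 * m + 1) * m); rewrite !(intrD, intrM, intrB, intrN); ring.
  + by exists (- (2 * m + 1) * (m + 1)); rewrite !(intrD, intrM, intrB, intrN); ring.
Qed.

Lemma pos_edge (c y : rat) : (c = 1 \/ c = -1) -> y \is a Num.int ->
  0 <= c * y + y * y.
Proof.
move=> hc /intrP [n ->].
case: hc => ->.
  have h : (0 <= n * (n + 1))%R by nia.
  by rewrite -(ler0z rat) intrM intrD in h; lra.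
have h : (0 <= n * (n - 1))%R by nia.
by rewrite -(ler0z rat) intrM intrB in h; lra.
Qed.

Lemma chiO_pm (o : E -> bool) e : chiO o e = 1 \/ chiO o e = -1.
Proof. by rewrite /chiO; case: (o e); [left|right]. Qed.

End Main.

Unset Implicit Arguments.

Theorem proposition3p3 (V E : finType) (src tgt : E -> V)
  (loopless : forall e : E, src e != tgt e) (x : E -> rat) :
  Short (cut_lattice src tgt) x <->
  (latQ (cut_lattice src tgt) x /\
   exists o : E -> bool,
     forall y, cut_lattice src tgt y -> dot x y = dot (chiO o) y).
Proof.
split.
- move=> [[[HQ Hint] Hchar] Hmin]; split => //.
  set d := divF src tgt [set: E] x.
  have gS : forall S, gF src tgt [set: E] d S = dot x (yS src tgt S) + dot (yS src tgt S) (yS src tgt S).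
    by move=> S; rewrite dot_yS dot_ySS.
  have Ha : forall S, 0 <= gF src tgt [set: E] d S.
    move=> S; have := Hmin _ (cut_yS src tgt S); rewrite dot_expand gS; lra.
  have Hc : forall S, exists k : int, gF src tgt [set: E] d S = 2 * k%:~R.
    move=> S; have [k Hk] := Hchar _ (cut_yS src tgt S).
    exists (k + (\sum_(e in [set: E]) cr src tgt S e)%N%:Z).
    rewrite gS intrD.
    have -> : ((\sum_(e in [set: E]) cr src tgt S e)%N%:Z%:~R : rat)
              = dot (yS src tgt S) (yS src tgt S).
      by rewrite dot_ySS /cutF -natr_sum.
    lra.
  have Hb : \sum_v d v = 0.
    transitivity (dot x (cobdry src tgt (fun _ => 1))).
      by rewrite dot_cobdry; apply: eq_bigr => v _; rewrite mul1r.
    by rewrite /dot big1 // => e _; rewrite /cobdry subrr mulr0.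
  have [o Ho] := hakimi (ltnSn #|[set: E]|) Ha Hc Hb.
  exists o => y [yint [f Hf]].
  have E1 : forall z, dot z y = dot z (cobdry src tgt f).
    by move=> z; apply: eq_bigr => e _; rewrite Hf.
  rewrite !E1 !dot_cobdry; apply: eq_bigr => v _; by rewrite -Ho.
- move=> [HQ [o Ho]].
  have Hdual : lat_dual (cut_lattice src tgt) x.
    split => // y Hy; rewrite Ho //; apply: rpred_sum => e _.
    apply: rpredM; last by case: Hy => + _; apply.
    by case: (chiO_pm o e) => ->; rewrite ?rpredN.
  split; first split => //.
  + move=> y Hy; rewrite Ho // /dot -sumrB.
    apply: (big_ind (fun z => exists k : int, z = 2 * k%:~R)).
    * by exists 0; rewrite mulr0.
    * by move=> a b [ka ->] [kb ->]; exists (ka + kb); rewrite intrD; ring.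
    * move=> e _; apply: par_edge; first exact: chiO_pm.
      by case: Hy => + _; apply.
  + move=> y Hy; rewrite dot_expand (Ho y Hy).
    suff : 0 <= dot (chiO o) y + dot y y by lra.
    rewrite /dot -big_split /=; apply: sumr_ge0 => e _.
    apply: pos_edge; first exact: chiO_pm.
    by case: Hy => + _; apply.
Qed.
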